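(* Let $\Gamma\subset\mathbb{R}^2$ be an arbitrary polygon, i.e. a finite union of straight line segments. Then there exists a set $A\subset\mathbb{R}^2$ of full Lebesgue measure such that $A+\Gamma$ has empty interior.
   Context: $X+Y=\{x+y:x\in X,y\in Y\}$; ''full measure'' means the complement has two-dimensional Lebesgue measure zero. *)

(* Defs.v *)
From HB Require Import structures.
From mathcomp Require Import all_boot all_order all_algebra.
From mathcomp Require Import all_classical all_reals all_analysis.
Set Implicit Arguments. Unset Strict Implicit. Unset Printing Implicit Defensive.
Import Order.TTheory GRing.Theory Num.Theory.
Import numFieldNormedType.Exports.
Local Open Scope classical_set_scope.
Local Open Scope ring_scope.

(* Points of R^2 are pairs (R * R), with the product topology and the
   product sigma-algebra; 2-d Lebesgue measure is the product of 1-d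
   Lebesgue measures. *)

Definition segment (R : realType) (a b : R * R) : set (R * R) :=
  [set z | exists2 t : R, (0 <= t <= 1) &
     z = ((1 - t) * a.1 + t * b.1, (1 - t) * a.2 + t * b.2)].

Definition polygon (R : realType) (G : set (R * R)) : Prop :=
  exists s : seq ((R * R) * (R * R)),
    G = [set z | exists2 p, p \in s & segment p.1 p.2 z].

Definition minkowski_sum (R : realType) (X Y : set (R * R)) : set (R * R) :=
  [set z | exists x, exists y, [/\ X x, Y y & z = (x.1 + y.1, x.2 + y.2)]].

Definition lebesgue2 (R : realType) : set (R * R) -> \bar R :=
  ((@lebesgue_measure R) \x (@lebesgue_measure R))%E.
Arguments lebesgue2 R : clear implicits.

(* Main.v *)
Require Import Defs.
From HB Require Import structures.
From mathcomp Require Import all_boot all_order all_algebra.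
From mathcomp Require Import all_classical all_reals all_analysis.
From mathcomp Require Import ring lra.
Import Order.TTheory GRing.Theory Num.Theory.
Import numFieldNormedType.Exports.
Local Open Scope classical_set_scope.
Local Open Scope ring_scope.

Section S.
Variable R : realType.

Lemma graph_null (k c : R) :
  (lebesgue2 R).-negligible [set z : R * R | z.2 = k * z.1 + c].
Proof.
pose g := fun z : R * R => z.2 - (k * z.1 + c).
have mg : measurable_fun setT g.
  apply: measurable_realfun.measurable_funB; first exact: measurable_snd.
  apply: measurable_realfun.measurable_funD; last exact: measurable_cst.
  apply: measurable_realfun.measurable_funM; first exact: measurable_cst.
  exact: measurable_fst.
have E : [set z : R * R | z.2 = k * z.1 + c] = g @^-1` [set 0].
  by apply/seteqP; split => z /=; rewrite /g => H; [rewrite H subrr | apply/eqP; rewrite -subr_eq0; apply/eqP].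
have mA : measurable [set z : R * R | z.2 = k * z.1 + c].
  by rewrite E -[X in measurable X]setTI; apply: mg => //; exact: measurable_set1.
have H := @negligibleP _ _ _ (lebesgue_measure \x lebesgue_measure)%E _ mA.
rewrite /lebesgue2; apply/H; rewrite /product_measure1 /=.
apply: integral0_eq => x _ /=.
have -> : xsection [set z : R * R | z.2 = k * z.1 + c] x = [set k * x + c].
  by apply/seteqP; split => y; rewrite /xsection /= inE.
exact: lebesgue_measure_set1.
Qed.

Lemma vline_null (c : R) :
  (lebesgue2 R).-negligible [set z : R * R | z.1 = c].
Proof.
have -> : [set z : R * R | z.1 = c] = [set c] `*` setT.
  by apply/seteqP; split => z /=; [move=> ->|case].
have mA : measurable ([set c] `*` [set: R]) by apply: measurableX => //; exact: measurable_set1.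
have H := @negligibleP _ _ _ (lebesgue_measure \x lebesgue_measure)%E _ mA.
rewrite /lebesgue2; apply/H.
transitivity (lebesgue_measure [set c] * lebesgue_measure [set: R])%E.
  by apply: product_measure1E => //; exact: measurable_set1.
by rewrite lebesgue_measure_set1 mul0e.
Qed.

Lemma l2S (A B : set (R * R)) : B `<=` A ->
  (lebesgue2 R).-negligible A -> (lebesgue2 R).-negligible B.
Proof. rewrite /lebesgue2; exact: (@negligibleS _ _ _ (lebesgue_measure \x lebesgue_measure)%E). Qed.

Lemma l2U (A B : set (R * R)) : (lebesgue2 R).-negligible A ->
  (lebesgue2 R).-negligible B -> (lebesgue2 R).-negligible (A `|` B).
Proof. rewrite /lebesgue2; exact: (@negligibleU _ _ _ (lebesgue_measure \x lebesgue_measure)%E). Qed.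

Lemma l20 : (lebesgue2 R).-negligible set0.
Proof. rewrite /lebesgue2; exact: (@negligible_set0 _ _ _ (lebesgue_measure \x lebesgue_measure)%E). Qed.

Lemma l2bigcup (F : nat -> set (R * R)) : (forall n, (lebesgue2 R).-negligible (F n)) ->
  (lebesgue2 R).-negligible (\bigcup_n F n).
Proof. rewrite /lebesgue2; exact: (@negligible_bigcup _ _ _ (lebesgue_measure \x lebesgue_measure)%E). Qed.

Lemma segment_null (a b : R * R) : (lebesgue2 R).-negligible (segment a b).
Proof.
have [e|ne] := eqVneq a.1 b.1.
  apply: l2S (vline_null a.1) => z [t _ ->] /=; rewrite -e; ring.
pose k := (b.2 - a.2) / (b.1 - a.1).
apply: l2S (graph_null k (a.2 - k * a.1)) => z [t _ ->] /=.
rewrite /k; field; by rewrite subr_eq0 eq_sym.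
Qed.

Definition segs (s : seq ((R * R) * (R * R))) :=
  [set z | exists2 p, p \in s & segment p.1 p.2 z].

Lemma segs_null s : (lebesgue2 R).-negligible (segs s).
Proof.
elim: s => [|p s IH].
  apply: l2S l20 => z [p]; by rewrite in_nil.
apply: (@l2S (segment p.1 p.2 `|` segs s)).
  move=> z [p']; rewrite in_cons => /orP[/eqP -> H|H1 H2]; [by left|right; by exists p'].
apply: l2U => //; exact: segment_null.
Qed.

End S.

Definition qs (R : realType) (n : nat) : R * R :=
  match @unpickle (rat * rat)%type n with
  | Some q => (ratr q.1, ratr q.2) | None => (0, 0) end.

Theorem mainTheorem11 (R : realType) (G : set (R * R)) :
  polygon G ->
  exists A : set (R * R),
    (lebesgue2 R).-negligible (~` A) /\ interior (minkowski_sum A G) = set0.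
Proof.
move=> [s ->].
pose sn n := [seq (((qs R n).1 - p.1.1, (qs R n).2 - p.1.2),
                   ((qs R n).1 - p.2.1, (qs R n).2 - p.2.2)) | p <- s].
pose B := \bigcup_n segs R (sn n).
exists (~` B); split.
  by rewrite setCK; apply: l2bigcup => n; exact: segs_null.
apply/seteqP; split => // z /nbhs_ballP [e /= e0 He].
have h1 : z.1 - e < z.1 + e.
  by rewrite ltrD2l -subr_gt0 opprK addr_gt0.
have [r1] := rat_in_itvoo h1; rewrite in_itv /= => /andP[l1 u1].
have h2 : z.2 - e < z.2 + e.
  by rewrite ltrD2l -subr_gt0 opprK addr_gt0.
have [r2] := rat_in_itvoo h2; rewrite in_itv /= => /andP[l2 u2].
have : minkowski_sum (~` B) (segs R s) (ratr r1, ratr r2).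
  apply: He; split => /=.
  - by rewrite /ball /= ltr_distlC l1 u1.
  - by rewrite /ball /= ltr_distlC l2 u2.
move=> [a [g [nBa [p ps [t t01 gE]] E]]].
apply: nBa; exists (pickle (r1, r2)) => //.
exists (((qs R (pickle (r1, r2))).1 - p.1.1, (qs R (pickle (r1, r2))).2 - p.1.2),
        ((qs R (pickle (r1, r2))).1 - p.2.1, (qs R (pickle (r1, r2))).2 - p.2.2)).
  by apply: (map_f _ ps).
exists t => //.
have -> : qs R (pickle (r1, r2)) = (ratr r1, ratr r2) by rewrite /qs pickleK.
move: E gE; case: a => a1 a2; case: g => g1 g2 [E1 E2] [G1 G2].
cbn [fst snd]; rewrite E1 E2 G1 G2; congr pair; ring.
Qed.
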